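(* There exist positive constants $c_1,c_2$ and constants $\delta_0=1/8$, $\alpha_0=e^{-8}/4$ such that for every $\delta\in(0,\delta_0)$, every $\alpha\in(0,\alpha_0)$, and every (randomized) algorithm that solves $(\delta,\alpha)$-BAIF, there exists a problem instance on which the expected number of arm pulls $T$ of the algorithm satisfies $\mathbb{E}[T]\ge c_1\frac{1}{\delta^2}\log\frac{c_2}{\alpha}$. In particular, the sample complexity of any algorithm solving $(\delta,\alpha)$-BAIF is $\Omega(\frac{1}{\delta^2}\log\frac1\alpha)$.
   Context: Best arm identification with failure, $(\delta,\alpha)$-BAIF: there are two arms $a_0,a_1$ with binary rewards in $\{0,1\}$; each pull of an arm gives an independent Bernoulli reward, and one arm has mean $\frac12+\frac\delta2$ (the optimal arm) while the other has mean $\frac12-\frac\delta2$, where $\delta\in(0,1)$. An algorithm adaptively pulls arms and then either returns FAIL or returns an arm. It solves $(\delta,\alpha)$-BAIF if on every such instance it returns FAIL with probability at most $\frac18$, and, conditioned on not returning FAIL, it returns the optimal arm with probability at least $1-\alpha$. *)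

(* Defs.v *)
From HB Require Import structures.
From mathcomp Require Import all_boot all_order all_algebra.
From mathcomp Require Import all_classical all_reals all_analysis.
Set Implicit Arguments. Unset Strict Implicit. Unset Printing Implicit Defensive.
Import Order.TTheory GRing.Theory Num.Theory.
Local Open Scope ring_scope.

(* Arms are booleans: false = a_0, true = a_1.
   A history is the chronological sequence of (arm pulled, reward observed). *)
Definition history := seq (bool * bool).

Inductive action := Pull of bool | Fail | Ret of bool.

(* A (randomized, adaptive) algorithm: after each history it chooses its next
   action according to a probability distribution over the five actions
   (behavioural randomization). *)
Definition policy (R : realType) := history -> action -> R.

Definition is_policy (R : realType) (pol : policy R) : Prop :=
  forall h : history,
    [/\ forall a, 0 <= pol h a &
        pol h (Pull false) + pol h (Pull true) + pol h Fail
          + pol h (Ret false) + pol h (Ret true) = 1].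

Definition arm_mean (R : realType) (delta : R) (opt a : bool) : R :=
  if a == opt then 1/2 + delta/2 else 1/2 - delta/2.

Definition reward_prob (R : realType) (delta : R) (opt a r : bool) : R :=
  if r then arm_mean delta opt a else 1 - arm_mean delta opt a.

Fixpoint reach_from (R : realType) (pol : policy R) (delta : R) (opt : bool)
    (pre h : history) : R :=
  match h with
  | [::] => 1
  | (a, r) :: t =>
      pol pre (Pull a) * reward_prob delta opt a r
        * reach_from pol delta opt (rcons pre (a, r)) t
  end.

Definition reach (R : realType) (pol : policy R) (delta : R) (opt : bool)
    (h : history) : R := reach_from pol delta opt [::] h.

Local Open Scope ereal_scope.

Definition prob_outcome (R : realType) (pol : policy R) (delta : R)
    (opt : bool) (o : action) : \bar R :=
  \sum_(n <oo)
     (\sum_(h : n.-tuple (bool * bool))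
         (reach pol delta opt h * pol h o))%R%:E.

(* Expected number of pulls E[T] = sum_{n >= 0} P(T >= n+1), in [0, +oo]
   (it is +oo in particular when the algorithm fails to halt with
   positive probability). *)
Definition expected_pulls (R : realType) (pol : policy R) (delta : R)
    (opt : bool) : \bar R :=
  \sum_(n <oo)
     (\sum_(h : n.+1.-tuple (bool * bool)) reach pol delta opt h)%R%:E.

(* (delta, alpha)-BAIF: on every instance, P(FAIL) <= 1/8 and, conditioned
   on not returning FAIL (i.e. on returning an arm), the returned arm is the
   optimal one with probability at least 1 - alpha (written multiplicatively
   to avoid dividing by the probability of the conditioning event). *)
Definition solves_BAIF (R : realType) (pol : policy R) (delta alpha : R)
    : Prop :=
  forall opt : bool,
    prob_outcome pol delta opt Fail <= (1 / 8 : R)%:E /\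
    ((1 - alpha)%R)%:E *
      (prob_outcome pol delta opt (Ret false)
         + prob_outcome pol delta opt (Ret true))
      <= prob_outcome pol delta opt (Ret opt).

(* Main.v *)
Require Import Defs.
From HB Require Import structures.
From mathcomp Require Import all_boot all_order all_algebra.
From mathcomp Require Import all_classical all_reals all_analysis.
From mathcomp Require Import ring lra.
Import Order.TTheory GRing.Theory Num.Theory.
Local Open Scope ring_scope.

Fixpoint sumH {R : realType} (n : nat) (F : history -> R) : R :=
  match n with
  | 0 => F [::]
  | n'.+1 => \sum_(x : bool * bool) sumH n' (fun t => F (x :: t))
  end.

Lemma tuple_sumH {R : realType} (n : nat) (F : history -> R) :
  \sum_(h : n.-tuple (bool * bool)) F h = sumH n F.
Proof.
elim: n F => [|n IH] F /=.
  rewrite (eq_bigr (fun _ => F [::])); last by move=> t _; rewrite [t]tuple0.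
  by rewrite sumr_const card_tuple expn0.
rewrite (@reindex _ _ _ _ _ (fun p : (bool * bool) * n.-tuple (bool * bool) =>
   [tuple of p.1 :: p.2])) /=; last first.
  exists (fun t : n.+1.-tuple _ => (thead t, [tuple of behead t])).
    by move=> [x t] _ /=; rewrite theadE; congr pair; apply/val_inj.
  by move=> t _ /=; rewrite [RHS]tuple_eta.
rewrite -(pair_big xpredT xpredT (fun x (t : n.-tuple _) => F (x :: t))) /=.
by apply: eq_bigr => x _; rewrite -IH.
Qed.

Lemma sumH_add {R : realType} n (F G : history -> R) :
  sumH n (fun h => F h + G h) = sumH n F + sumH n G.
Proof. by rewrite -!tuple_sumH big_split. Qed.

Lemma sumH_opp {R : realType} n (F : history -> R) :
  sumH n (fun h => - F h) = - sumH n F.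
Proof. by rewrite -!tuple_sumH sumrN. Qed.

Lemma sumH_scale {R : realType} n k (F : history -> R) :
  sumH n (fun h => k * F h) = k * sumH n F.
Proof. by rewrite -!tuple_sumH mulr_sumr. Qed.

Lemma sumH_le {R : realType} n (F G : history -> R) :
  (forall h, F h <= G h) -> sumH n F <= sumH n G.
Proof. by move=> FG; rewrite -!tuple_sumH; apply: ler_sum => i _. Qed.

Lemma sumH_ge0 {R : realType} n (F : history -> R) :
  (forall h, 0 <= F h) -> 0 <= sumH n F.
Proof. by move=> F0; rewrite -!tuple_sumH; apply: sumr_ge0 => i _. Qed.

Lemma sumH_rcons {R : realType} n (F : history -> R) :
  sumH n.+1 F = sumH n (fun h => \sum_(x : bool * bool) F (rcons h x)).
Proof.
elim: n F => [|n IH] F //.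
rewrite [LHS]/= [RHS]/=.
by apply: eq_bigr => x _; exact: (IH (fun t => F (x :: t))).
Qed.

Lemma sum_pair {R : realType} (f : bool * bool -> R) :
  \sum_(x : bool * bool) f x =
  f (false, false) + f (false, true) + f (true, false) + f (true, true).
Proof.
rewrite (eq_bigr (fun p => (fun a b => f (a, b)) p.1 p.2)); last by case.
rewrite -(pair_bigA _ (fun a b => f (a, b))) /= !big_bool /=.
ring.
Qed.

Lemma reach_from_rcons {R : realType} (pol : policy R) d o pre h a r :
  reach_from pol d o pre (rcons h (a, r)) =
  reach_from pol d o pre h * pol (pre ++ h) (Pull a) * reward_prob d o a r.
Proof.
elim: h pre => [|[b s] t IH] pre /=.
  by rewrite cats0 mul1r mulr1.
by rewrite IH cat_rcons !mulrA.
Qed.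

Lemma reach_rcons {R : realType} (pol : policy R) d o h a r :
  reach pol d o (rcons h (a, r)) =
  reach pol d o h * pol h (Pull a) * reward_prob d o a r.
Proof. by rewrite /reach reach_from_rcons. Qed.

Lemma reach_from_ge0 {R : realType} (pol : policy R) d o pre h :
  is_policy pol -> 0 <= d <= 1 -> 0 <= reach_from pol d o pre h.
Proof.
move=> Hp /andP[d0 d1].
elim: h pre => [|[a r] t IH] pre /=; first exact: ler01.
apply: mulr_ge0; last exact: IH.
apply: mulr_ge0; first by case: (Hp pre) => H _; apply: H.
rewrite /reward_prob /arm_mean; case: r; case: (a == o); lra.
Qed.

Definition stopp {R : realType} (pol : policy R) h :=
  pol h Fail + pol h (Ret false) + pol h (Ret true).

Lemma step_mass {R : realType} (pol : policy R) d o h :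
  is_policy pol ->
  \sum_(x : bool * bool) reach pol d o (rcons h x) =
  reach pol d o h * (1 - stopp pol h).
Proof.
move=> Hp; case: (Hp h) => _ H1.
rewrite sum_pair !reach_rcons /stopp /reward_prob /arm_mean.
have -> : 1 - (pol h Fail + pol h (Ret false) + pol h (Ret true)) =
          pol h (Pull false) + pol h (Pull true) by rewrite -H1; ring.
by case: o => /=; ring.
Qed.

Definition sc {R : realType} (x : bool * bool) : R :=
  if x.2 == ~~ x.1 then 1 else -1.
Definition Sh {R : realType} (h : history) : R := \sum_(x <- h) sc x.
Definition cc {R : realType} (d : R) : R := ln (1/2 + d/2) - ln (1/2 - d/2).

Lemma Sh_rcons {R : realType} h x : Sh (rcons h x) = Sh h + sc x :> R.
Proof. by rewrite /Sh -cats1 big_cat big_seq1. Qed.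

Lemma expR_cc {R : realType} {d : R} : 0 < d < 1 ->
  expR (- cc d) = (1/2 - d/2) / (1/2 + d/2) /\
  expR (cc d) = (1/2 + d/2) / (1/2 - d/2).
Proof.
move=> /andP[d0 d1].
have hp : 0 < 1/2 + d/2 by lra.
have hq : 0 < 1/2 - d/2 by lra.
rewrite /cc opprB !expRD !expRN !lnK ?posrE //.
Qed.

Lemma rp_change {R : realType} (d : R) a r : 0 < d < 1 ->
  reward_prob d true a r =
  reward_prob d false a r * expR (- (cc d * sc (a, r))).
Proof.
move=> hd; have [e1 e2] := expR_cc (d:=d) hd.
move: hd => /andP[d0 d1].
have hp : 1/2 + d/2 != 0 by apply/eqP; lra.
have hq : 1/2 - d/2 != 0 by apply/eqP; lra.
rewrite /reward_prob /arm_mean /sc.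
case: a; case: r => /=; rewrite ?mulr1 ?mulrN1 ?opprK ?e1 ?e2. all: field; apply/eqP; lra.
Qed.

Lemma reach_from_change {R : realType} (pol : policy R) d pre h : 0 < d < 1 ->
  reach_from pol d true pre h =
  reach_from pol d false pre h * expR (- (cc d * Sh h)).
Proof.
move=> hd; elim: h pre => [|[a r] t IH] pre /=.
  by rewrite /Sh big_nil mulr0 oppr0 expR0 mulr1.
rewrite IH rp_change // /Sh big_cons mulrDr opprD expRD -/(Sh t).
ring.
Qed.

Lemma reach_change {R : realType} (pol : policy R) d h : 0 < d < 1 ->
  reach pol d true h = reach pol d false h * expR (- (cc d * Sh h)).
Proof. exact: reach_from_change. Qed.

Lemma step_mart {R : realType} (pol : policy R) d h :
  is_policy pol ->
  \sum_(x : bool * bool) reach pol d false (rcons h x) * Sh (rcons h x) =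
  reach pol d false h * (1 - stopp pol h) * Sh h
  + d * (reach pol d false h * (1 - stopp pol h)).
Proof.
move=> Hp; case: (Hp h) => _ H1.
rewrite sum_pair !reach_rcons !Sh_rcons /stopp /reward_prob /arm_mean /sc.
have -> : 1 - (pol h Fail + pol h (Ret false) + pol h (Ret true)) =
          pol h (Pull false) + pol h (Pull true) by rewrite -H1; ring.
by rewrite /=; field.
Qed.

Lemma eq_sumH {R : realType} n (F G : history -> R) :
  (forall h, F h = G h) -> sumH n F = sumH n G.
Proof. by move=> FG; congr sumH; apply/funext. Qed.

Definition alive {R : realType} (pol : policy R) d o n :=
  sumH n (reach pol d o).
Definition Pout {R : realType} (pol : policy R) d o n act :=
  sumH n (fun h => reach pol d o h * pol h act).
Definition stopm {R : realType} (pol : policy R) d o n :=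
  sumH n (fun h => reach pol d o h * stopp pol h).
Definition Wm {R : realType} (pol : policy R) d n :=
  sumH n (fun h => reach pol d false h * Sh h).
Definition Wst {R : realType} (pol : policy R) d n :=
  sumH n (fun h => reach pol d false h * stopp pol h * Sh h).

Lemma stopmE {R : realType} (pol : policy R) d o n :
  stopm pol d o n = Pout pol d o n Fail + Pout pol d o n (Ret false)
                    + Pout pol d o n (Ret true).
Proof.
rewrite /stopm /Pout -!sumH_add; apply: eq_sumH => h; rewrite /stopp; ring.
Qed.

Lemma alive_succ {R : realType} (pol : policy R) d o n : is_policy pol ->
  alive pol d o n.+1 = alive pol d o n - stopm pol d o n.
Proof.
move=> Hp; rewrite /alive sumH_rcons /stopm -sumH_opp -sumH_add.
by apply: eq_sumH => h; rewrite step_mass //; ring.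
Qed.

Lemma mass_total {R : realType} (pol : policy R) d o n : is_policy pol ->
  \sum_(0 <= m < n) stopm pol d o m + alive pol d o n = 1.
Proof.
move=> Hp; elim: n => [|n IH].
  by rewrite big_geq // add0r.
by rewrite big_nat_recr //= alive_succ // -IH; ring.
Qed.

Lemma mart_total {R : realType} (pol : policy R) d n : is_policy pol ->
  Wm pol d n + \sum_(0 <= m < n) Wst pol d m
  = d * \sum_(0 <= m < n) alive pol d false m.+1.
Proof.
move=> Hp; elim: n => [|n IH].
  by rewrite !big_geq // addr0 mulr0 /Wm /= /Sh big_nil mulr0.
have -> : Wm pol d n.+1 = Wm pol d n - Wst pol d n + d * alive pol d false n.+1.
  rewrite /Wm sumH_rcons alive_succ // /alive /stopm /Wst -sumH_opp -!sumH_add.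
  rewrite -sumH_opp -sumH_add -sumH_scale -sumH_add.
  by apply: eq_sumH => h; rewrite step_mart //; ring.
rewrite !big_nat_recr //= mulrDr -IH; ring.
Qed.

Lemma ptw1 {R : realType} (c S u : R) : 0 <= u ->
  u - u * expR (- (c * S)) <= c * (u * S).
Proof.
move=> u0; have := expR_ge1Dx (- (c * S)) => H.
have : u * (1 + - (c * S)) <= u * expR (- (c * S)) by apply: ler_wpM2l.
lra.
Qed.

Lemma ptw2 {R : realType} (c S u th : R) : 0 <= u -> 0 < th ->
  (ln th + 1) * u - th * (u * expR (- (c * S))) <= c * (u * S).
Proof.
move=> u0 th0; have := expR_ge1Dx (ln th - (c * S)) => H.
rewrite expRD lnK ?posrE // in H.
have : u * (1 + (ln th - (c * S))) <= u * (th * expR (- (c * S))).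
  by apply: ler_wpM2l.
lra.
Qed.

Lemma reach_ge0 {R : realType} (pol : policy R) d o h :
  is_policy pol -> 0 <= d <= 1 -> 0 <= reach pol d o h.
Proof. exact: reach_from_ge0. Qed.

Lemma pol_ge0 {R : realType} (pol : policy R) h a :
  is_policy pol -> 0 <= pol h a.
Proof. by move=> Hp; case: (Hp h) => H _; apply: H. Qed.

Lemma ptwL2 {R : realType} (pol : policy R) d h th :
  is_policy pol -> 0 < d < 1 -> 0 < th ->
  (ln th + 1) * (reach pol d false h * pol h (Ret false))
  - th * (reach pol d true h * pol h (Ret false))
  - reach pol d true h * stopp pol h
  <= cc d * (reach pol d false h * stopp pol h * Sh h).
Proof.
move=> Hp hd th0.
have hd' : 0 <= d <= 1 by move: hd => /andP[? ?]; apply/andP; split; lra.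
rewrite reach_change //.
set r0 := reach pol d false h; set e := expR _.
have r00 : 0 <= r0 by apply: reach_ge0.
have e0 : 0 <= e by apply: expR_ge0.
have pF := pol_ge0 pol h Fail Hp.
have pR0 := pol_ge0 pol h (Ret false) Hp.
have pR1 := pol_ge0 pol h (Ret true) Hp.
have H1 := ptw1 (cc d) (Sh h) _ (mulr_ge0 r00 (addr_ge0 pF pR1)).
have H2 := ptw2 (cc d) (Sh h) _ _ (mulr_ge0 r00 pR0) th0.
rewrite -/e in H1 H2.
have H3 : 0 <= r0 * e * pol h (Ret false) by rewrite mulr_ge0 // mulr_ge0.
have H4 : 0 <= r0 * (pol h Fail + pol h (Ret true)) by rewrite mulr_ge0 // addr_ge0.
rewrite /stopp.
have E1 : cc d * (r0 * (pol h Fail + pol h (Ret false) + pol h (Ret true)) * Sh h)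
  = cc d * (r0 * (pol h Fail + pol h (Ret true)) * Sh h)
    + cc d * (r0 * pol h (Ret false) * Sh h) by ring.
rewrite E1.
have E2 : (ln th + 1) * (r0 * pol h (Ret false)) -
  th * (r0 * e * pol h (Ret false)) -
  r0 * e * (pol h Fail + pol h (Ret false) + pol h (Ret true))
  = ((ln th + 1) * (r0 * pol h (Ret false)) - th * (r0 * pol h (Ret false) * e))
    + (- (r0 * (pol h Fail + pol h (Ret true)) * e)) - r0 * e * pol h (Ret false)
    by ring.
rewrite E2.
have E3 : cc d * (r0 * (pol h Fail + pol h (Ret true)) * Sh h) =
  cc d * ((r0 * (pol h Fail + pol h (Ret true))) * Sh h) by [].
have E4 : cc d * (r0 * pol h (Ret false) * Sh h) =
  cc d * ((r0 * pol h (Ret false)) * Sh h) by [].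
lra.
Qed.

Lemma key_ineq {R : realType} (pol : policy R) d th n :
  is_policy pol -> 0 < d < 1 -> 0 < th ->
  (ln th + 1) * \sum_(0 <= m < n) Pout pol d false m (Ret false)
  - th * \sum_(0 <= m < n) Pout pol d true m (Ret false) - 1
  <= cc d * (Wm pol d n + \sum_(0 <= m < n) Wst pol d m).
Proof.
move=> Hp hd th0.
have hd' : 0 <= d <= 1 by move: hd => /andP[? ?]; apply/andP; split; lra.
have HW : - alive pol d true n <= cc d * Wm pol d n.
  rewrite /Wm /alive -sumH_scale -sumH_opp; apply: sumH_le => h.
  rewrite reach_change //.
  have r00 := reach_ge0 pol d false h Hp hd'.
  have := ptw1 (cc d) (Sh h) _ r00.
  have := expR_ge0 (- (cc d * Sh h)).
  nra.
have HS : forall m, (ln th + 1) * Pout pol d false m (Ret false)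
   - th * Pout pol d true m (Ret false) - stopm pol d true m
   <= cc d * Wst pol d m.
  move=> m; rewrite /Pout /stopm /Wst -!sumH_scale -!sumH_opp -!sumH_add.
  by apply: sumH_le => h; apply: ptwL2.
have HS' : \sum_(0 <= m < n) ((ln th + 1) * Pout pol d false m (Ret false)
   - th * Pout pol d true m (Ret false) - stopm pol d true m)
   <= \sum_(0 <= m < n) cc d * Wst pol d m.
  by apply: ler_sum => m _; exact: HS.
rewrite !big_split /= !sumrN -!mulr_sumr in HS'.
have Hm := mass_total pol d true n Hp.
rewrite mulrDr; lra.
Qed.

Lemma series_le {R : realType} (u : nat -> R) (M : R) :
  (forall m, 0 <= u m) -> (forall k, \sum_(0 <= m < k) u m <= M) ->
  (\sum_(m <oo) (u m)%:E <= M%:E)%E.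
Proof.
move=> u0 uM.
have u0' : forall n, (0 <= n)%N -> xpredT n -> (0 <= (u n)%:E)%E.
  by move=> n _ _; rewrite lee_fin.
apply: (lime_le (is_cvg_nneseries u0')); apply: nearW => k.
by rewrite sumEFin lee_fin.
Qed.

Lemma series_ge {R : realType} (u : nat -> R) k :
  (forall m, 0 <= u m) ->
  ((\sum_(0 <= m < k) u m)%:E <= \sum_(m <oo) (u m)%:E)%E.
Proof.
move=> u0; rewrite -sumEFin; apply: nneseries_lim_ge => n _ _.
by rewrite lee_fin.
Qed.

Lemma series_fin {R : realType} (u : nat -> R) (M : R) :
  (forall m, 0 <= u m) -> (forall k, \sum_(0 <= m < k) u m <= M) ->
  exists x : R, (\sum_(m <oo) (u m)%:E = x%:E)%E /\
    (forall k, \sum_(0 <= m < k) u m <= x) /\ x <= M.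
Proof.
move=> u0 uM.
have hle := series_le u M u0 uM.
have hge : (0 <= \sum_(m <oo) (u m)%:E)%E.
  by apply: nneseries_ge0 => n _ _; rewrite lee_fin.
have hfin : (\sum_(m <oo) (u m)%:E)%E \is a fin_num.
  by rewrite ge0_fin_numE // (le_lt_trans hle) // ltey.
exists (fine (\sum_(m <oo) (u m)%:E)%E).
rewrite fineK //; split => //; split.
  by move=> k; rewrite -lee_fin fineK //; exact: series_ge.
by rewrite -lee_fin fineK.
Qed.

Lemma po_eq {R : realType} (pol : policy R) d o act :
  prob_outcome pol d o act = (\sum_(m <oo) (Pout pol d o m act)%:E)%E.
Proof.
apply: eq_eseriesr => m _.
by rewrite (tuple_sumH m (fun h => reach pol d o h * pol h act)).
Qed.

Lemma ep_eq {R : realType} (pol : policy R) d o :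
  expected_pulls pol d o = (\sum_(m <oo) (alive pol d o m.+1)%:E)%E.
Proof.
apply: eq_eseriesr => m _.
by rewrite (tuple_sumH m.+1 (fun h => reach pol d o h)).
Qed.

Lemma alive_ge0 {R : realType} (pol : policy R) d o n :
  is_policy pol -> 0 <= d <= 1 -> 0 <= alive pol d o n.
Proof. by move=> Hp hd; apply: sumH_ge0 => h; apply: reach_ge0. Qed.

Lemma Pout_ge0 {R : realType} (pol : policy R) d o n act :
  is_policy pol -> 0 <= d <= 1 -> 0 <= Pout pol d o n act.
Proof.
by move=> Hp hd; apply: sumH_ge0 => h; apply: mulr_ge0; [apply: reach_ge0 | apply: pol_ge0].
Qed.

Lemma stopm_ge0 {R : realType} (pol : policy R) d o n :
  is_policy pol -> 0 <= d <= 1 -> 0 <= stopm pol d o n.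
Proof.
move=> Hp hd; rewrite stopmE.
by rewrite !addr_ge0 ?Pout_ge0.
Qed.

Lemma alive_mono {R : realType} (pol : policy R) d o m k :
  is_policy pol -> 0 <= d <= 1 -> alive pol d o (m + k) <= alive pol d o m.
Proof.
move=> Hp hd; elim: k => [|k IH]; first by rewrite addn0.
rewrite addnS alive_succ //; have := stopm_ge0 pol d o (m + k) Hp hd; lra.
Qed.

Definition terminal (act : action) := if act is Pull _ then false else true.

Lemma Pout_le_stopm {R : realType} (pol : policy R) d o n act :
  is_policy pol -> 0 <= d <= 1 -> terminal act ->
  Pout pol d o n act <= stopm pol d o n.
Proof.
move=> Hp hd; rewrite stopmE.
have h1 := Pout_ge0 pol d o n Fail Hp hd.
have h2 := Pout_ge0 pol d o n (Ret false) Hp hd.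
have h3 := Pout_ge0 pol d o n (Ret true) Hp hd.
by case: act => //= [|[]] _; lra.
Qed.

Lemma stop_range {R : realType} (pol : policy R) d o n k :
  is_policy pol -> (n <= k)%N ->
  \sum_(n <= m < k) stopm pol d o m = alive pol d o n - alive pol d o k.
Proof.
move=> Hp nk.
have Hn := mass_total pol d o n Hp.
have Hk := mass_total pol d o k Hp.
rewrite (big_cat_nat _ (n:=n)) //= in Hk.
lra.
Qed.

Lemma Pout_partial_le {R : realType} (pol : policy R) d o act n k :
  is_policy pol -> 0 <= d <= 1 -> terminal act -> (n <= k)%N ->
  \sum_(n <= m < k) Pout pol d o m act <= alive pol d o n.
Proof.
move=> Hp hd ht nk.
apply: (le_trans (y := \sum_(n <= m < k) stopm pol d o m)).
  by apply: ler_sum => m _; apply: Pout_le_stopm.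
rewrite stop_range //; have := alive_ge0 pol d o k Hp hd; lra.
Qed.

Lemma tail_bound {R : realType} (pol : policy R) d o act n k :
  is_policy pol -> 0 <= d <= 1 -> terminal act ->
  \sum_(0 <= m < k) Pout pol d o m act
  <= \sum_(0 <= m < n) Pout pol d o m act + alive pol d o n.
Proof.
move=> Hp hd ht.
have a0 := alive_ge0 pol d o n Hp hd.
case: (leqP k n) => kn.
  rewrite (big_cat_nat _ (n:=k) (p:=n)) //=.
  have : 0 <= \sum_(k <= m < n) Pout pol d o m act.
    by apply: sumr_ge0 => m _; apply: Pout_ge0.
  lra.
rewrite (big_cat_nat _ (n:=n) (p:=k)) //= ?(ltnW kn) //.
have := Pout_partial_le pol d o act n k Hp hd ht (ltnW kn); lra.
Qed.

Lemma cc_bounds {R : realType} (d : R) : 0 < d < 1/8 -> 0 <= cc d <= 3 * d.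
Proof.
move=> /andP[d0 d8].
have hd : 0 < d < 1 by apply/andP; split; lra.
have [e1 e2] := expR_cc (d:=d) hd.
have h1 := expR_ge1Dx (cc d).
have h2 := expR_ge1Dx (- cc d).
rewrite e2 in h1; rewrite e1 in h2.
have hp : 0 < 1/2 + d/2 by lra.
have hq : 0 < 1/2 - d/2 by lra.
apply/andP; split.
  have : (1/2 - d/2) / (1/2 + d/2) <= 1.
    by rewrite ler_pdivrMr // mul1r; lra.
  lra.
have : (1/2 + d/2) / (1/2 - d/2) <= 1 + 3 * d.
  rewrite ler_pdivrMr //; nra.
lra.
Qed.

Theorem lemma5p1 (R : realType) :
  exists c1 c2 : R, 0 < c1 /\ 0 < c2 /\
    forall delta alpha : R,
      0 < delta < 1 / 8 ->
      0 < alpha < expR (-8) / 4 ->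
      forall pol : policy R, is_policy pol ->
        solves_BAIF pol delta alpha ->
        exists opt : bool,
          ((c1 / delta ^+ 2 * ln (c2 / alpha))%:E
             <= expected_pulls pol delta opt)%E.
Proof.
exists (1/8), (1/2); split; first lra; split; first lra.
move=> d al /andP[d0 d8] /andP[a0 a1] pol Hp Hs; exists false.
have hd : 0 < d < 1 by apply/andP; split; lra.
have hd' : 0 <= d <= 1 by apply/andP; split; lra.
have e8 : expR (-8) < 1 :> R by rewrite expR_lt1; lra.
have e80 : 0 < expR (-8) :> R := expR_gt0 _.
have al4 : al < 1/4 by lra.
rewrite ep_eq.
have aS0 : forall m, 0 <= alive pol d false m.+1.
  by move=> m; apply: alive_ge0.
have sum0 : (0 <= \sum_(m <oo) (alive pol d false m.+1)%:E)%E.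
  by apply: nneseries_ge0 => m _ _; rewrite lee_fin.
case: (boolP ((\sum_(m <oo) (alive pol d false m.+1)%:E)%E \is a fin_num))
  => hfin; last first.
  move: hfin; rewrite ge0_fin_numE // ltey => /negbNE/eqP ->; exact: leey.
set E := fine (\sum_(m <oo) (alive pol d false m.+1)%:E)%E.
have EE : (\sum_(m <oo) (alive pol d false m.+1)%:E)%E = E%:E by rewrite fineK.
rewrite EE lee_fin.
have Epart : forall k, \sum_(0 <= m < k) alive pol d false m.+1 <= E.
  by move=> k; rewrite -lee_fin -EE; apply: series_ge.
have E0 : 0 <= E by have := Epart 0%N; rewrite big_geq.
set n := (Num.bound (16 * E)).+1.
have hn : 16 * E < n%:R.
  have := archi_boundP (mulr_ge0 (ler0n _ 16) E0).
  rewrite /n -addn1 natrD; lra.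
have an : n%:R * alive pol d false n <= E.
  have : \sum_(0 <= m < n) alive pol d false n
         <= \sum_(0 <= m < n) alive pol d false m.+1.
    apply: ler_sum_nat => m /andP[_ mn].
    have := alive_mono pol d false m.+1 (n - m.+1) Hp hd'.
    by rewrite subnKC.
  rewrite sumr_const_nat subn0 -mulr_natr => h.
  have := Epart n; lra.
have an0 := alive_ge0 pol d false n Hp hd'.
have n0 : 0 < n%:R :> R by rewrite ltr0n.
have an16 : alive pol d false n <= 1/16 by nra.
have alive0 : forall o, alive pol d o 0 = 1 by [].
have part1 : forall o act k, terminal act ->
    \sum_(0 <= m < k) Pout pol d o m act <= 1.
  move=> o act k ht; rewrite -(alive0 o).
  exact: Pout_partial_le.
have Pg : forall o act m, 0 <= Pout pol d o m act.
  by move=> o act m; apply: Pout_ge0.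
have [x0F [ex0F [px0F _]]] :=
  series_fin (fun m => Pout pol d false m Fail) 1 (Pg false Fail)
    (fun k => part1 false Fail k erefl).
have [x0R0 [ex0R0 [px0R0 _]]] :=
  series_fin (fun m => Pout pol d false m (Ret false)) 1 (Pg false (Ret false))
    (fun k => part1 false (Ret false) k erefl).
have [x0R1 [ex0R1 [px0R1 _]]] :=
  series_fin (fun m => Pout pol d false m (Ret true)) 1 (Pg false (Ret true))
    (fun k => part1 false (Ret true) k erefl).
have [x1R0 [ex1R0 [px1R0 _]]] :=
  series_fin (fun m => Pout pol d true m (Ret false)) 1 (Pg true (Ret false))
    (fun k => part1 true (Ret false) k erefl).
have [x1R1 [ex1R1 [px1R1 _]]] :=
  series_fin (fun m => Pout pol d true m (Ret true)) 1 (Pg true (Ret true))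
    (fun k => part1 true (Ret true) k erefl).
have x1sum : x1R0 + x1R1 <= 1.
  have := series_le (fun m => Pout pol d true m (Ret false)
                              + Pout pol d true m (Ret true)) 1
    (fun m => addr_ge0 (Pg _ _ m) (Pg _ _ m)).
  have -> : (\sum_(m <oo) (Pout pol d true m (Ret false)
                            + Pout pol d true m (Ret true))%:E
      = \sum_(m <oo) ((Pout pol d true m (Ret false))%:E
                            + (Pout pol d true m (Ret true))%:E))%E.
    by apply: eq_eseriesr => m _; rewrite EFinD.
  rewrite nneseriesD; first last.
  - by move=> m _ _; rewrite lee_fin.
  - by move=> m _ _; rewrite lee_fin.
  rewrite ex1R0 ex1R1 -EFinD lee_fin; apply.
  move=> k.
  apply: (le_trans (y := \sum_(0 <= m < k) stopm pol d true m)).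
    apply: ler_sum => m _; rewrite stopmE.
    have := Pg true Fail m; lra.
  rewrite stop_range // alive0; have := alive_ge0 pol d true k Hp hd'; lra.
have [HF0 HR0] := Hs false.
have [_ HR1] := Hs true.
rewrite !po_eq ex0F lee_fin in HF0.
rewrite !po_eq ex0R0 ex0R1 -EFinD -EFinM lee_fin in HR0.
rewrite !po_eq ex1R0 ex1R1 -EFinD -EFinM lee_fin in HR1.
set A := \sum_(0 <= m < n) Pout pol d false m (Ret false).
set A1 := \sum_(0 <= m < n) Pout pol d false m (Ret true).
set AF := \sum_(0 <= m < n) Pout pol d false m Fail.
set B := \sum_(0 <= m < n) Pout pol d true m (Ret false).
have Hmass : AF + A + A1 + alive pol d false n = 1.
  rewrite -(mass_total pol d false n Hp).
  by rewrite (eq_bigr _ (fun m _ => stopmE pol d false m)) !big_split.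
have Htail : x0R0 <= A + alive pol d false n.
  rewrite -lee_fin -ex0R0; apply: series_le; first exact: Pg.
  by move=> k; apply: tail_bound.
have hAF : AF <= x0F := px0F n.
have hA1 : A1 <= x0R1 := px0R1 n.
have hB : B <= x1R0 := px1R0 n.
have hX : 13/16 <= x0R0 + x0R1.
  have hA0 : A <= x0R0 by exact: px0R0.
  lra.
have hX2 : 3/4 * (x0R0 + x0R1) <= (1 - al) * (x0R0 + x0R1).
  by apply: ler_wpM2r; lra.
have hA : 1/2 <= A by lra.
have hx1 : x1R0 <= al.
  have : al * (x1R0 + x1R1) <= al * 1 by apply: ler_wpM2l; lra.
  have x0 : 0 <= x1R0 by have := px1R0 0%N; rewrite big_geq.
  lra.
set th := 1 / 2 / al.
have th0 : 0 < th by rewrite /th divr_gt0 //; lra.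
have Hkey := key_ineq pol d th n Hp hd th0.
rewrite mart_total // -/A -/B in Hkey.
have Hthal : th * al = 1/2 by rewrite /th divfK //; apply/eqP; lra.
have HthB : th * B <= 1/2 by rewrite -Hthal; apply: ler_wpM2l; lra.
have Hth8 : 8 <= ln th.
  rewrite -ler_expR lnK ?posrE //.
  rewrite /th ler_pdivlMr //.
  have : expR 8 * expR (-8) = 1 :> R by rewrite -expRD addrN expR0.
  have := expR_gt0 (8 : R).
  nra.
have HA2 : (ln th + 1) * (1/2) <= (ln th + 1) * A by apply: ler_wpM2l; lra.
have hd8 : 0 < d < 1/8 by apply/andP.
have [cc0 cc3] := andP (cc_bounds d hd8).
have HE1 : cc d * (d * \sum_(0 <= m < n) alive pol d false m.+1) <= cc d * (d * E).
  apply: ler_wpM2l => //; apply: ler_wpM2l; [lra | exact: Epart].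
have HE2 : cc d * (d * E) <= (3 * d) * (d * E).
  by apply: ler_wpM2r => //; apply: mulr_ge0; lra.
have -> : 1 / 8 / d ^+ 2 * ln th = ln th / (8 * (d * d)).
  by rewrite expr2; field; apply/eqP; lra.
rewrite ler_pdivrMr; last by apply: mulr_gt0; [lra | apply: mulr_gt0].
lra.
Qed.
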